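(* Let $c,K>0$. There is a constant $\bar c=\bar c(c,K)>0$ such that the following holds. Let $N\in\mathbb{N}$, $\varepsilon\ge N^{-1/2}$, let $\{\mathcal{F}_n\}_{n\ge0}$ be a filtration and $B_n$ a sequence of $\mathcal{F}_n$-measurable random variables with $B_0=0$, such that $\Delta_n=B_n-B_{n-1}$ satisfies for all $n\le N$: $$\mathbf{E}(\Delta_n\mid\mathcal{F}_{n-1})\le-\varepsilon\quad\text{and}\quad\mathbf{E}(e^{c|\Delta_n|}\mid\mathcal{F}_{n-1})\le K.$$ Then $$\mathbf{P}(B_N\ge0)\le\begin{cases}e^{-\bar c\sqrt{\varepsilon N}}&\text{if }\varepsilon\ge N^{-1/3},\\ Ne^{-\bar c\varepsilon^2N}&\text{if }\varepsilon<N^{-1/3}.\end{cases}$$ *)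

(* Defs.v *)
From HB Require Import structures.
From mathcomp Require Import all_boot all_order all_algebra.
From mathcomp Require Import all_classical all_reals all_analysis.
Set Implicit Arguments. Unset Strict Implicit. Unset Printing Implicit Defensive.
Import Order.TTheory GRing.Theory Num.Theory.
Local Open Scope classical_set_scope.
Local Open Scope ring_scope.

Section Defs.
Context {d : measure_display} {T : measurableType d} {R : realType}.

Definition sub_sigma (G : set (set T)) : Prop :=
  sigma_algebra setT G /\ G `<=` measurable.

Definition filtration (F : nat -> set (set T)) : Prop :=
  (forall n, sub_sigma (F n)) /\ (forall n, F n `<=` F n.+1).

Definition G_measurable (G : set (set T)) (f : T -> R) : Prop :=
  forall U : set R, measurable U -> G (f @^-1` U).

(* Y is a version of the conditional expectation E(X | G) (X integrable) *)
Definition cond_exp_version (P : probability T R) (G : set (set T))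
  (X Y : T -> R) : Prop :=
  [/\ P.-integrable setT (EFin \o X), G_measurable G Y,
      P.-integrable setT (EFin \o Y) &
      forall A, G A ->
        (\int[P]_(x in A) (Y x)%:E = \int[P]_(x in A) (X x)%:E)%E].

Definition cond_exp_le (P : probability T R) (G : set (set T))
  (X : T -> R) (b : R) : Prop :=
  exists Y, cond_exp_version P G X Y /\ {ae P, forall x, Y x <= b}.

End Defs.

(* Main.v *)
Require Import Defs.
From HB Require Import structures.
From mathcomp Require Import all_boot all_order all_algebra.
From mathcomp Require Import all_classical all_reals all_analysis.
From mathcomp Require Import measurable_realfun.
From mathcomp Require Import ring lra.
Import Order.TTheory GRing.Theory Num.Theory.
Local Open Scope classical_set_scope.
Local Open Scope ring_scope.

Lemma exp_basic (R : realType) (y : R) : expR y <= 1 + y + y ^+ 2 * expR `|y|.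
Proof.
have h1 := expR_ge1Dx (- y).
have h2 := expR_ge1Dx y.
have ey0 : 0 < expR y := expR_gt0 y.
have eyN : expR y * expR (- y) = 1 by rewrite -expRD subrr expR0.
have k1 : expR y - 1 <= y * expR y.
  have : expR y * (1 - y) <= expR y * expR (- y) by rewrite ler_pM2l.
  rewrite eyN; nra.
case: (lerP 0 y) => y0.
  rewrite ger0_norm //; nra.
rewrite ltr0_norm //.
have h3 := expR_ge1Dx (- y).
have : y * (expR y - 1) <= y ^+ 2 by nra.
nra.
Qed.

Lemma exp_quad (R : realType) (l x c : R) : 0 <= l -> l <= c / 2 -> 0 < c ->
  expR (l * x) <= 1 + l * x + (16 / c ^+ 2) * l ^+ 2 * expR (c * `|x|).
Proof.
move=> l0 lc c0.
apply: (le_trans (exp_basic _ (l * x))).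
rewrite lerD2l.
set E := expR (c * `|x| / 2).
set F := expR (c * `|x| / 4).
have EF : E = F * F by rewrite /E /F -expRD; congr expR; field.
have EE : expR (c * `|x|) = E * E by rewrite /E -expRD; congr expR; field.
have F1 : 1 + c * `|x| / 4 <= F by exact: expR_ge1Dx.
have ax0 : 0 <= `|x| := normr_ge0 x.
have hx2 : x ^+ 2 = `|x| ^+ 2 by rewrite real_normK // num_real.
have x2E : c ^+ 2 * x ^+ 2 <= 16 * E.
  rewrite hx2 EF; have : 0 <= c * `|x| / 4.
    by apply: divr_ge0 => //; apply: mulr_ge0 => //; exact: ltW.
  nra.
have ly : expR `|l * x| <= E.
  rewrite ler_expR normrM ger0_norm //.
  have : l * `|x| <= c / 2 * `|x| by apply: ler_wpM2r.
  lra.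
have E0 : 0 < E := expR_gt0 _.
have c20 : 0 < c ^+ 2 by rewrite exprn_gt0.
rewrite EE exprMn.
have -> : 16 / c ^+ 2 * l ^+ 2 * (E * E) = l ^+ 2 * ((16 * E) / c ^+ 2 * E) by field; rewrite gt_eqF.
rewrite -[X in X <= _]mulrA; apply: ler_wpM2l; first exact: sqr_ge0.
apply: (@le_trans _ _ (x ^+ 2 * E)).
  by apply: ler_wpM2l => //; exact: sqr_ge0.
apply: ler_wpM2r; first exact: ltW.
by rewrite ler_pdivlMr // mulrC.
Qed.

Lemma pow2inv (R : realType) (N : nat) : ((N%:R : R) `^ (- (1 / 2))) ^+ 2 = N%:R^-1.
Proof.
rewrite -powR_mulrn ?powR_ge0// -powRrM.
have -> : - (1 / 2) * 2%:R = - 1 :> R by field.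
by rewrite powR_inv1.
Qed.

Lemma pow3inv (R : realType) (N : nat) : ((N%:R : R) `^ (- (1 / 3))) ^+ 3 = N%:R^-1.
Proof.
rewrite -powR_mulrn ?powR_ge0// -powRrM.
have -> : - (1 / 3) * 3%:R = - 1 :> R by field.
by rewrite powR_inv1.
Qed.

Lemma final_arith (R : realType) (c K N eps : R) :
  0 < c -> 0 < K -> 1 <= N ->
  let Dc := 16 / c ^+ 2 in
  let a := 1 / (4 * Dc * K) in
  let cbar := Num.min (c / 4) a in
  let l := if c / 2 <= 2 * a * eps then c / 2 else 2 * a * eps in
  N ^-1 <= eps ^+ 2 -> 0 < eps ->
  expR (- (l * eps / 2) * N) <=
  (if (N ^-1 <= eps ^+ 3)
   then expR (- cbar * Num.sqrt (eps * N))
   else N * expR (- cbar * (eps ^+ 2 * N))).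
Proof.
move=> c0 K0 N1 Dc a cbar l e2 e0.
have N0 : 0 < N by lra.
have Dc0 : 0 < Dc by rewrite /Dc divr_gt0 // exprn_gt0.
have a0 : 0 < a by rewrite /a divr_gt0 // mulr_gt0 // mulr_gt0.
have cb1 : cbar <= c / 4 by rewrite /cbar ge_min lexx.
have cb2 : cbar <= a by rewrite /cbar ge_min lexx orbT.
have e2N : 1 <= eps ^+ 2 * N by rewrite -(ler_pdivrMr _ _ N0) mul1r.
have eN : 1 <= eps * N.
  case: (lerP 1 eps) => h; nra.
have lr : (l = c / 2 /\ c / 2 <= 2 * a * eps) \/ (l = 2 * a * eps /\ 2 * a * eps < c / 2).
  by rewrite /l; case: ifP => h; [left | right; rewrite ltNge h].
case: ifP => h3.
  have e3N : 1 <= eps ^+ 3 * N by rewrite -(ler_pdivrMr _ _ N0) mul1r.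
  set s := Num.sqrt (eps * N).
  have s0 : 0 <= s := sqrtr_ge0 _.
  have ss : s ^+ 2 = eps * N by rewrite sqr_sqrtr // mulr_ge0 // ltW.
  have s1 : s <= eps * N by nra.
  have s2 : s <= eps ^+ 2 * N by nra.
  rewrite ler_expR.
  case: lr => [[-> _]|[-> _]]; nra.
have e1 : eps < 1.
  have h3' : eps ^+ 3 < N^-1 by rewrite ltNge h3.
  have Ni : N^-1 <= 1 by rewrite invf_le1.
  rewrite ltNge; apply/negP => h; have := exprn_ege1 3 h; lra.
apply: (@le_trans _ _ (expR (- cbar * (eps ^+ 2 * N)))).
  rewrite ler_expR.
  have p0 : 0 <= eps ^+ 2 * N by apply: mulr_ge0; [exact: sqr_ge0 | lra].
  case: lr => [[-> _]|[-> _]].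
    have h1 : eps ^+ 2 * N <= eps * N by nra.
    have h2 : cbar * (eps ^+ 2 * N) <= c / 4 * (eps ^+ 2 * N) by apply: ler_wpM2r.
    nra.
  have h2 : cbar * (eps ^+ 2 * N) <= a * (eps ^+ 2 * N) by apply: ler_wpM2r.
  nra.
by apply: ler_peMl => //; exact: ltW (expR_gt0 _).
Qed.

Section Helpers.
Context {d : measure_display} {T : measurableType d} {R : realType}.
Variable P : probability T R.

Lemma Gmeas_comp (G : set (set T)) (f : T -> R) (h : R -> R) :
  G_measurable G f -> measurable_fun setT h -> G_measurable G (h \o f).
Proof.
move=> Gf mh U mU; rewrite comp_preimage; apply: Gf.
by have := mh measurableT U mU; rewrite setTI.
Qed.

Lemma Gmeas_meas (G : set (set T)) (f : T -> R) :
  sub_sigma G -> G_measurable G f -> measurable_fun setT f.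
Proof. by move=> [_ sub] Gf _ U mU; rewrite setTI; exact: sub _ (Gf U mU). Qed.

Lemma Gmeas_ge (G : set (set T)) (f : T -> R) (a : R) :
  G_measurable G f -> G [set x | a <= f x].
Proof.
move=> Gf.
have -> : [set x | a <= f x] = f @^-1` [set r | a <= r] by [].
apply: Gf.
have -> : [set r : R | a <= r] = [set` `[a, +oo[%R] .
  by apply/seteqP; split => r /=; rewrite in_itv /= andbT.
exact: measurable_itv.
Qed.

Lemma integrable_bdd (f : T -> R) (M : R) :
  measurable_fun setT f -> (forall x, `|f x| <= M) ->
  P.-integrable setT (EFin \o f).
Proof.
move=> mf fM; apply: (@le_integrable _ _ _ _ _ measurableT _ (EFin \o cst M)).
- by apply/measurable_EFinP.
- by move=> x _ /=; rewrite lee_fin (le_trans (fM x)) ?ler_norm.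
- exact: finite_measure_integrable_cst.
Qed.

Lemma integrable_bddM (h X : T -> R) (M : R) :
  measurable_fun setT h -> (forall x, `|h x| <= M) ->
  P.-integrable setT (EFin \o X) ->
  P.-integrable setT (EFin \o (fun x => h x * X x)).
Proof.
move=> mh hM iX.
have mX : measurable_fun setT X by apply/measurable_EFinP; case/integrableP: iX.
apply: (@le_integrable _ _ _ _ _ measurableT _ (fun x => M%:E * `|(X x)%:E|)%E).
- by apply/measurable_EFinP; exact: measurable_funM.
- move=> x _ /=; rewrite lee_fin normrM.
  have M0 : 0 <= M by apply: le_trans (hM x).
  rewrite normrM (ger0_norm M0) normr_id.
  by apply: ler_wpM2r => //.
- exact: (integrableZl measurableT M (integrable_abse iX)).
Qed.

Lemma cel_version (G : set (set T)) (X : T -> R) (b : R) :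
  sub_sigma G -> cond_exp_le P G X b ->
  exists Y, cond_exp_version P G X Y /\ (forall x, Y x <= b).
Proof.
move=> HG [Y0 [[iX GY0 iY0 hA] ae]].
have sub := HG.2.
have mY0 : measurable_fun setT Y0 := @Gmeas_meas G Y0 HG GY0.
pose h := (id \min cst b) : R -> R.
have mh : measurable_fun setT h.
  exact: measurable_minr (@measurable_id _ _ _) (measurable_cst b).
have mhY : measurable_fun setT (h \o Y0) by exact: measurableT_comp.
exists (h \o Y0); split; last by move=> x; rewrite /h /= ge_min lexx orbT.
split => //.
- exact: Gmeas_comp.
- have ig := integrableD measurableT (integrable_abse iY0)
     (finite_measure_integrable_cst P `|b| measurableT).
  apply: (le_integrable measurableT _ _ ig).
    by apply/measurable_EFinP.
  move=> x _ /=; rewrite !lee_fin /h /=.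
  rewrite (@ger0_norm _ (`|Y0 x| + `|b|)) ?addr_ge0//.
  case: (leP (Y0 x) b) => _; first by rewrite lerDl.
  by rewrite lerDr.
- move=> A GA; rewrite -(hA A GA).
  have mA := sub A GA.
  apply: ae_eq_integral => //.
  + by apply/measurable_EFinP; exact: measurable_funS mhY.
  + by apply/measurable_EFinP; exact: measurable_funS mY0.
  + apply: filterS ae => x Hx _ /=.
    by rewrite /h /= min_l.
Qed.

Lemma ind_version (G : set (set T)) (X Y : T -> R) (A : set T) :
  sub_sigma G -> cond_exp_version P G X Y -> G A ->
  \int[P]_x (\1_A x * X x) = \int[P]_x (\1_A x * Y x).
Proof.
move=> HG [iX GY iY hA] GAs.
have eX : \int[P]_x (\1_A x * X x) = \int[P]_(x in A) X x.
  rewrite [RHS]Rintegral_mkcond; apply: eq_Rintegral => x _; rewrite patchE indicE.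
  by case: (x \in A); rewrite ?mul1r ?mul0r.
have eY : \int[P]_x (\1_A x * Y x) = \int[P]_(x in A) Y x.
  rewrite [RHS]Rintegral_mkcond; apply: eq_Rintegral => x _; rewrite patchE indicE.
  by case: (x \in A); rewrite ?mul1r ?mul0r.
by rewrite eX eY /Rintegral (hA A GAs).
Qed.

Lemma integrableZ_R (f : T -> R) (r : R) :
  P.-integrable setT (EFin \o f) -> P.-integrable setT (EFin \o (fun x => r * f x)).
Proof. by move=> i; apply: (eq_integrable measurableT _ _ _ (integrableZl measurableT r i)) => x _. Qed.

Lemma integrableD_R (f g : T -> R) :
  P.-integrable setT (EFin \o f) -> P.-integrable setT (EFin \o g) ->
  P.-integrable setT (EFin \o (fun x => f x + g x)).
Proof. by move=> i j; apply: (eq_integrable measurableT _ _ _ (integrableD measurableT i j)) => x _. Qed.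

Lemma integrableB_R (f g : T -> R) :
  P.-integrable setT (EFin \o f) -> P.-integrable setT (EFin \o g) ->
  P.-integrable setT (EFin \o (fun x => f x - g x)).
Proof. by move=> i j; apply: (eq_integrable measurableT _ _ _ (integrableB measurableT i j)) => x _. Qed.

Lemma integrable_norm_R (f : T -> R) :
  P.-integrable setT (EFin \o f) -> P.-integrable setT (EFin \o (fun x => `|f x|)).
Proof. by move=> i; apply: (eq_integrable measurableT _ _ _ (integrable_abse i)) => x _. Qed.

Lemma Rintegral_cst1 (r : R) : \int[P]_x r = r.
Proof. rewrite Rintegral_cst//; have h1 : P setT = 1%E by exact: probability_setT.
change (r * fine (P [set: T]) = r); by rewrite h1 /= mulr1. Qed.

Lemma key (G : set (set T)) (X Y Z : T -> R) (b m : R) :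
  sub_sigma G -> cond_exp_version P G X Y -> (forall x, Y x <= b) ->
  G_measurable G Z -> (forall x, 0 <= Z x <= m) ->
  \int[P]_x (Z x * X x) <= b * \int[P]_x Z x.
Proof.
move=> HG V Yb GZ Zb.
have [iX GY iY hA] := V.
have sub := HG.2.
have mZ : measurable_fun setT Z := @Gmeas_meas G Z HG GZ.
have mX : measurable_fun setT X by apply/measurable_EFinP; case/integrableP: iX.
have mY : measurable_fun setT Y by apply/measurable_EFinP; case/integrableP: iY.
have Zm x : `|Z x| <= m by have /andP[Z0 Zm] := Zb x; rewrite ger0_norm.
pose iaX := \int[P]_x `|X x|.
have iaX0 : 0 <= iaX by apply: Rintegral_ge0 => x _.
apply/ler_addgt0Pr => e e0.
pose de := e / (`|b| + iaX + 1).
have den0 : 0 < `|b| + iaX + 1 by rewrite ltr_wpDl ?addr_ge0.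
have de0 : 0 < de by rewrite divr_gt0.
pose k := (Num.trunc (m / de)).+1.
have mk : m <= k%:R * de.
  rewrite -ler_pdivrMr//; apply: ltW; exact: truncnS_gt.
pose A (j : nat) := [set x | j.+1%:R * de <= Z x].
have GA j : G (A j) by exact: Gmeas_ge.
have mA j : measurable (A j) by exact: sub.
pose S (n : nat) x := de * \sum_(j < n) \1_(A j) x.
have Srec n x : S n.+1 x = S n x + de * \1_(A n) x.
  by rewrite /S big_ord_recr /= mulrDr.
have S0 n x : 0 <= S n x.
  by apply: mulr_ge0; [exact: ltW | apply: sumr_ge0 => j _; rewrite indicE].
have eS n : n.+1%:R * de = n%:R * de + de by rewrite -natr1 mulrDl mul1r.
have Sup n x : S n x <= Z x /\ S n x <= n%:R * de.
  elim: n => [|n [IH1 IH2]].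
    by rewrite /S big_ord0 mulr0 mul0r; split => //; case/andP: (Zb x).
  rewrite Srec indicE eS; case: (boolP (x \in A n)) => xA /=.
    move: xA; rewrite inE /A /= eS => xA.
    rewrite mulr1; split; lra.
  rewrite mulr0 addr0; split; lra.
have Slo n x : Z x - de <= S n x \/ n%:R * de <= S n x.
  elim: n => [|n IH].
    by right; rewrite mul0r.
  rewrite Srec indicE eS; case: (boolP (x \in A n)) => xA /=.
    move: xA; rewrite inE /A /= eS => xA.
    rewrite mulr1; right; case: IH => IH; lra.
  rewrite mulr0 addr0; left.
  move: xA; rewrite notin_setE /A /= eS => /negP; rewrite -ltNge => xA.
  case: IH => IH; lra.
have mS n : measurable_fun setT (S n).
  apply: measurable_funM; first exact: measurable_cst.
  by apply: measurable_sum => j; exact: measurable_indic.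
have Sbd n x : `|S n x| <= n%:R * de by rewrite ger0_norm//; case: (Sup n x).
have iS n : P.-integrable setT (EFin \o S n) := integrable_bdd _ _ (mS n) (Sbd n).
have iSX n : P.-integrable setT (EFin \o (fun x => S n x * X x)) :=
  integrable_bddM _ _ _ (mS n) (Sbd n) iX.
have iSY n : P.-integrable setT (EFin \o (fun x => S n x * Y x)) :=
  integrable_bddM _ _ _ (mS n) (Sbd n) iY.
have iZ : P.-integrable setT (EFin \o Z) := integrable_bdd _ _ mZ Zm.
have iZX := integrable_bddM _ _ _ mZ Zm iX.
have iaXi : P.-integrable setT (EFin \o (fun x => `|X x|)) := integrable_norm_R _ iX.
have i1 n (f : T -> R) : P.-integrable setT (EFin \o f) ->
    P.-integrable setT (EFin \o (fun x => \1_(A n) x * f x)).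
  move=> i; apply: (integrable_bddM _ _ 1 _ _ i).
    exact: measurable_indic.
  by move=> x; rewrite indicE; case: (x \in A n); rewrite ?normr1 ?normr0.
have Sid n : \int[P]_x (S n x * X x) = \int[P]_x (S n x * Y x).
  elim: n => [|n IH].
    have ez (f : T -> R) : (fun x => S 0 x * f x) = fun _ => 0.
      by apply/funext => x; rewrite /S big_ord0 mulr0 mul0r.
    by rewrite (ez X) (ez Y).
  have e1 (f : T -> R) : (fun x => S n.+1 x * f x) =
      (fun x => S n x * f x + de * (\1_(A n) x * f x)).
    by apply/funext => x; rewrite Srec mulrDl mulrA.
  rewrite (e1 X) (e1 Y) RintegralD//; last exact/integrableZ_R/i1.
  rewrite RintegralD//; last exact/integrableZ_R/i1.
  rewrite RintegralZl//; last exact: i1.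
  rewrite RintegralZl//; last exact: i1.
  by rewrite IH (ind_version _ _ _ _ HG V (GA n)).
set u := \int[P]_x S k x.
set v := \int[P]_x Z x.
have Sle : \int[P]_x (S k x * Y x) <= b * u.
  apply: (@le_trans _ _ (\int[P]_x (b * S k x))).
    apply: le_Rintegral => //; first exact: integrableZ_R.
    by move=> x _; rewrite [b * _]mulrC; apply: ler_wpM2l.
  by rewrite RintegralZl.
have ZS x : `|Z x - S k x| <= de.
  have := Sup k x; have := Slo k x; have := Zb x; move=> /andP[Z0 Zm'].
  rewrite ler_norml; case => h [h1 h2]; apply/andP; split; lra.
have Zle : v <= u + de.
  rewrite -(Rintegral_cst1 de) -RintegralD//; last exact: finite_measure_integrable_cst.
  apply: le_Rintegral => //.
    by apply: integrableD_R => //; exact: finite_measure_integrable_cst.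
  move=> x _; have := ZS x; rewrite ler_norml => /andP[h1 h2]; lra.
have SleZ : u <= v.
  by apply: le_Rintegral => // x _; case: (Sup k x).
have Xdiff : \int[P]_x (Z x * X x) <= \int[P]_x (S k x * X x) + de * iaX.
  rewrite -lerBlDl -RintegralB// /iaX -RintegralZl//.
  apply: le_Rintegral => //; first exact: integrableB_R.
    exact: integrableZ_R.
  move=> x _; rewrite -mulrBl; apply: le_trans (ler_norm _) _.
  rewrite normrM; apply: ler_wpM2r => //.
have hb : b * u <= b * v + `|b| * de.
  case: (lerP 0 b) => hb0; [rewrite ger0_norm//; nra | rewrite ltr0_norm//; nra].
have he : de * (`|b| + iaX + 1) = e by rewrite /de divfK// gt_eqF.
rewrite (Sid k) in Xdiff.
nra.
Qed.

Lemma step (G : set (set T)) (Bp Bn : T -> R) (c K eps l Q : R) :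
  sub_sigma G -> G_measurable G Bp -> measurable_fun setT Bn ->
  cond_exp_le P G (fun x => Bn x - Bp x) (- eps) ->
  cond_exp_le P G (fun x => expR (c * `|Bn x - Bp x|)) K ->
  0 < c -> 0 <= l -> l <= c / 2 ->
  1 - l * eps + (16 / c ^+ 2) * l ^+ 2 * K <= Q -> 0 <= Q ->
  (\int[P]_x (expR (l * Bn x))%:E <= Q%:E * \int[P]_x (expR (l * Bp x))%:E)%E.
Proof.
move=> HG GBp mBn h1 h2 c0 l0 lc hQ Q0.
have [Y1 [V1 Y1b]] := cel_version _ _ _ HG h1.
have [Y2 [V2 Y2b]] := cel_version _ _ _ HG h2.
have [iDl _ _ _] := V1.
have [iW _ _ _] := V2.
set Dl := fun x => Bn x - Bp x.
set W := fun x => expR (c * `|Bn x - Bp x|).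
have mBp : measurable_fun setT Bp := @Gmeas_meas G Bp HG GBp.
have mDl : measurable_fun setT Dl by exact: measurable_funB.
pose Zm (m : nat) x := Num.min (expR (l * Bp x)) m%:R.
have mh (m : nat) : measurable_fun setT (fun r : R => Num.min (expR (l * r)) m%:R).
  apply: measurable_minr; last exact: measurable_cst.
  rewrite (_ : (fun x => expR (l * x)) = expR \o ( *%R l)) //.
  by apply: measurableT_comp => //; exact: measurable_expR.
have GZ m : G_measurable G (Zm m) by exact: (Gmeas_comp _ _ _ GBp (mh m)).
have mZ m : measurable_fun setT (Zm m) := @Gmeas_meas G _ HG (GZ m).
have Zb m x : 0 <= Zm m x <= m%:R.
  rewrite /Zm; apply/andP; split; last by rewrite ge_min lexx orbT.
  by rewrite le_min; apply/andP; split; [exact: ltW (expR_gt0 _) | exact: ler0n].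
have Zn m x : `|Zm m x| <= m%:R by have /andP[a b] := Zb m x; rewrite ger0_norm.
have iZ m : P.-integrable setT (EFin \o Zm m) := integrable_bdd _ _ (mZ m) (Zn m).
have iZD m := integrable_bddM _ _ _ (mZ m) (Zn m) iDl.
have iZW m := integrable_bddM _ _ _ (mZ m) (Zn m) iW.
set Dc := 16 / c ^+ 2.
have Dc0 : 0 <= Dc by rewrite /Dc divr_ge0// sqr_ge0.
pose Fm m x := Zm m x + (l * (Zm m x * Dl x) + (Dc * l ^+ 2) * (Zm m x * W x)).
have iF m : P.-integrable setT (EFin \o Fm m).
  by apply: integrableD_R => //; apply: integrableD_R; apply: integrableZ_R.
have bnd m : \int[P]_x Fm m x <= Q * \int[P]_x Zm m x.
  rewrite /Fm RintegralD//; last first.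
    by apply: integrableD_R; apply: integrableZ_R.
  rewrite RintegralD//; try by apply: integrableZ_R.
  rewrite !RintegralZl//.
  have k1 := key _ _ _ _ _ _ HG V1 Y1b (GZ m) (Zb m).
  have k2 := key _ _ _ _ _ _ HG V2 Y2b (GZ m) (Zb m).
  have I0 : 0 <= \int[P]_x Zm m x by apply: Rintegral_ge0 => x _; case/andP: (Zb m x).
  have l20 : 0 <= Dc * l ^+ 2 by rewrite mulr_ge0// sqr_ge0.
  have a1 : l * \int[P]_x (Zm m x * Dl x) <= l * (- eps * \int[P]_x Zm m x).
    by apply: ler_wpM2l.
  have a2 : Dc * l ^+ 2 * \int[P]_x (Zm m x * W x) <= Dc * l ^+ 2 * (K * \int[P]_x Zm m x).
    by apply: ler_wpM2l.
  have a3 : (1 - l * eps + Dc * l ^+ 2 * K) * \int[P]_x Zm m x <= Q * \int[P]_x Zm m x.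
    by apply: ler_wpM2r.
  nra.
have mEp : measurable_fun setT (fun x => expR (l * Dl x)).
  rewrite (_ : (fun x => expR (l * Dl x)) = expR \o ( *%R l) \o Dl) //.
  by apply: measurableT_comp => //; apply: measurableT_comp => //; exact: measurable_expR.
have g'm m : measurable_fun setT (fun x => (Zm m x * expR (l * Dl x))%:E).
  by apply/measurable_EFinP; exact: measurable_funM.
have Ep0 x : 0 <= expR (l * Dl x) by exact: ltW (expR_gt0 _).
have lim_eq : (fun x => (expR (l * Bn x))%:E) =
    fun x => limn (fun m => (Zm m x * expR (l * Dl x))%:E).
  apply/funext => x; apply/esym; apply: lim_near_cst => //.
  exists (Num.trunc (expR (l * Bp x))).+1 => // m /= hm.
  rewrite /Zm min_l; last first.
    by apply: ltW; apply: (lt_le_trans (truncnS_gt _)); rewrite ler_nat.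
  by rewrite -expRD /Dl; congr (EFin (expR _)); ring.
rewrite lim_eq monotone_convergence //; first last.
- move=> x _ m m' hmm; rewrite lee_fin; apply: ler_wpM2r => //.
  rewrite /Zm le_min !ge_min lexx /=; apply/orP; right; by rewrite ler_nat.
- by move=> m x _; rewrite lee_fin; apply: mulr_ge0 => //; case/andP: (Zb m x).
apply: lime_le.
  apply: ereal_nondecreasing_is_cvgn => m m' hmm.
  apply: ge0_le_integral => //.
  - by move=> x _; rewrite lee_fin; apply: mulr_ge0 => //; case/andP: (Zb m x).
  - move=> x _; rewrite lee_fin; apply: ler_wpM2r => //.
    rewrite /Zm le_min !ge_min lexx /=; apply/orP; right; by rewrite ler_nat.
apply: nearW => m.
apply: (@le_trans _ _ (\int[P]_x (Fm m x)%:E)%E).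
  apply: ge0_le_integral => //.
  - by move=> x _; rewrite lee_fin; apply: mulr_ge0 => //; case/andP: (Zb m x).
  - by apply/measurable_EFinP; case/integrableP: (iF m) => /measurable_EFinP.
  - move=> x _; rewrite lee_fin.
    have -> : Fm m x = Zm m x * (1 + l * Dl x + Dc * l ^+ 2 * W x) by rewrite /Fm; ring.
    apply: ler_wpM2l; first by case/andP: (Zb m x).
    exact: exp_quad.
have e1 : (\int[P]_x (Fm m x)%:E)%E = (\int[P]_x Fm m x)%:E.
  by rewrite /Rintegral fineK//; apply: integrable_fin_num => //; exact: iF.
have e2 : (\int[P]_x (Zm m x)%:E)%E = (\int[P]_x Zm m x)%:E.
  by rewrite /Rintegral fineK//; apply: integrable_fin_num => //; exact: iZ.
rewrite e1; apply: (@le_trans _ _ (Q%:E * (\int[P]_x Zm m x)%:E)%E).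
  by rewrite -EFinM lee_fin.
apply: lee_wpmul2l; first by rewrite lee_fin.
rewrite -e2; apply: ge0_le_integral => //.
- by move=> x _; rewrite lee_fin; case/andP: (Zb m x).
- by apply/measurable_EFinP.
- apply/measurable_EFinP.
  rewrite (_ : (fun x => expR (l * Bp x)) = expR \o ( *%R l) \o Bp) //.
  by apply: measurableT_comp => //; apply: measurableT_comp => //; exact: measurable_expR.
- by move=> x _; rewrite lee_fin /Zm ge_min lexx.
Qed.

End Helpers.

Theorem propositionA1 (R : realType) (c K : R) :
  0 < c -> 0 < K ->
  exists cbar : R, 0 < cbar /\
  forall (N : nat) (eps : R) (d : measure_display) (T : measurableType d)
    (P : probability T R) (F : nat -> set (set T)) (B : nat -> T -> R),
  (0 < N)%N ->
  (N%:R) `^ (- (1 / 2)) <= eps ->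
  filtration F ->
  (forall n, G_measurable (F n) (B n)) ->
  B 0%N = (fun _ => 0) ->
  (forall n, (1 <= n <= N)%N ->
     cond_exp_le P (F n.-1) (fun x => B n x - B n.-1 x) (- eps) /\
     cond_exp_le P (F n.-1) (fun x => expR (c * `|B n x - B n.-1 x|)) K) ->
  (P [set x | (0 <= B N x)%R] <=
     (if (N%:R) `^ (- (1 / 3)) <= eps
      then expR (- cbar * Num.sqrt (eps * N%:R))
      else N%:R * expR (- cbar * (eps ^+ 2 * N%:R)))%R%:E)%E.
Proof.
move=> c0 K0.
pose Dc := 16 / c ^+ 2.
pose a := 1 / (4 * Dc * K).
have Dc0 : 0 < Dc by rewrite /Dc divr_gt0 // exprn_gt0.
have a0 : 0 < a by rewrite /a divr_gt0 // mulr_gt0 // mulr_gt0.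
exists (Num.min (c / 4) a).
split.
  by rewrite lt_min; apply/andP; split => //; rewrite divr_gt0.
move=> N eps d T P F B N0 heps HF GB B0 hyp.
have N1 : 1 <= (N%:R : R) by rewrite ler1n.
have p0 : 0 < (N%:R : R) `^ (- (1 / 2)) by apply: powR_gt0; rewrite ltr0n.
have e0 : 0 < eps by apply: lt_le_trans heps.
have e2 : N%:R^-1 <= eps ^+ 2 by rewrite -(pow2inv R N); nra.
pose l := if c / 2 <= 2 * a * eps then c / 2 else 2 * a * eps.
pose Q := expR (- (l * eps / 2)).
have l0 : 0 <= l by rewrite /l; case: ifP => _; apply: ltW;
  [rewrite divr_gt0 | rewrite mulr_gt0 // mulr_gt0].
have lc : l <= c / 2 by rewrite /l; case: ifP => // /negbT; rewrite -ltNge => /ltW.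
have l2 : l <= 2 * a * eps by rewrite /l; case: ifP.
have Q0 : 0 <= Q by exact: ltW (expR_gt0 _).
have hQ : 1 - l * eps + Dc * l ^+ 2 * K <= Q.
  have aD : a * (4 * Dc * K) = 1 by rewrite /a mul1r mulVf // gt_eqF // mulr_gt0 // mulr_gt0.
  have h1 : Dc * K * l <= Dc * K * (2 * a * eps) by apply: ler_wpM2l => //; apply: ltW; rewrite mulr_gt0.
  have h2 : Dc * l ^+ 2 * K <= l * eps / 2 by nra.
  apply: le_trans (expR_ge1Dx _); lra.
have ind n : (n <= N)%N -> (\int[P]_x (expR (l * B n x))%:E <= (Q ^+ n)%:E)%E.
  elim: n => [_|n IH hn].
    rewrite B0 /= (_ : (fun x => (expR (l * 0))%:E) = cst 1%E); last first.
      by apply/funext => x; rewrite mulr0 expR0.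
    rewrite integral_cst // expr0.
    have h1 : P setT = 1%E by exact: probability_setT.
    change (1 * P [set: T] <= 1%:E)%E; by rewrite h1 mule1.
  have [h1 h2] := hyp n.+1 hn.
  apply: (le_trans (step P _ _ _ _ _ _ _ _ (HF.1 n) (GB n) (Gmeas_meas _ _ (HF.1 n.+1) (GB n.+1)) h1 h2 c0 l0 lc hQ Q0)).
  rewrite exprS EFinM; apply: lee_wpmul2l; first by rewrite lee_fin.
  exact: IH (ltnW hn).
set A := [set x | 0 <= B N x].
have mA : measurable A := (HF.1 N).2 _ (Gmeas_ge _ _ 0 (GB N)).
have -> : P A = (\int[P]_x (\1_A x)%:E)%E by rewrite integral_indic // setIT.
apply: (@le_trans _ _ ((Q ^+ N)%:E)).
  apply: (@le_trans _ _ (\int[P]_x (expR (l * B N x))%:E)%E); last exact: ind.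
  apply: ge0_le_integral => //.
  - by apply/measurable_EFinP; exact: measurable_indic.
  - apply/measurable_EFinP.
    rewrite (_ : (fun x => expR (l * B N x)) = expR \o ( *%R l) \o B N) //.
    apply: measurableT_comp => //; last exact: (Gmeas_meas _ _ (HF.1 N) (GB N)).
    by apply: measurableT_comp => //; exact: measurable_expR.
  - move=> x _; rewrite lee_fin indicE; case: (boolP (x \in A)) => xA /=.
      move: xA; rewrite inE /A /= => xA.
      apply: le_trans (expR_ge1Dx _); rewrite lerDl; exact: mulr_ge0.
    exact: ltW (expR_gt0 _).
rewrite lee_fin /Q -expRM_natr.
have p3 : 0 <= (N%:R : R) `^ (- (1 / 3)) := powR_ge0 _ _.
have hc : ((N%:R : R) `^ (- (1 / 3)) <= eps) = (N%:R^-1 <= eps ^+ 3).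
  by rewrite -(pow3inv R N) ler_pXn2r // nnegrE ?ltW.
rewrite hc.
exact: (final_arith _ _ _ _ _ c0 K0 N1 e2 e0).
Qed.
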